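(* Let $A,B\colon\mathbb{R}_{>0}\to\mathbb{R}_{>0}$ be continuous functions that are eventually monotone decreasing and satisfy $\lim_{x\to\infty}A(x)=\lim_{x\to\infty}B(x)=0$. Let $(a_t)_{t\ge1}$ and $(b_t)_{t\ge1}$ be sequences in $\mathbb{R}_{>0}$ satisfying $a_{t+1}=a_t+A(a_t)$ and $b_{t+1}=b_t+B(b_t)$ for all $t$. If $\lim_{x\to\infty}A(x)/B(x)=1$, then $\lim_{t\to\infty}a_t/b_t=1$. *)

(* Defs.v *)
From Stdlib Require Import Reals.
Open Scope R_scope.

Definition lim_at_infty (f : R -> R) (l : R) : Prop :=
  forall eps : R, 0 < eps ->
    exists M : R, forall x : R, M <= x -> Rabs (f x - l) < eps.

Definition eventually_decreasing (f : R -> R) : Prop :=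
  exists M : R, forall x y : R, M <= x -> x <= y -> f y <= f x.

(* Main.v *)
Require Import Defs.
From Stdlib Require Import Reals Lra Lia Classical.
Open Scope R_scope.

Lemma to_infty (A : R -> R) (a : nat -> R)
  (hApos : forall x, 0 < x -> 0 < A x)
  (hAcont : forall x, 0 < x -> continuity_pt A x)
  (hapos : forall t, (1 <= t)%nat -> 0 < a t)
  (harec : forall t, (1 <= t)%nat -> a (S t) = a t + A (a t)) :
  forall K, exists N, (1 <= N)%nat /\ forall t, (N <= t)%nat -> K <= a t.
Proof.
  assert (mono : forall t k, (1 <= t)%nat -> a t <= a (t + k)%nat).
  { intros t k Ht. induction k as [|k IH].
    - rewrite Nat.add_0_r; lra.
    - replace (t + S k)%nat with (S (t + k)) by lia.
      rewrite harec by lia. pose proof (hApos _ (hapos (t+k)%nat ltac:(lia))). lra. }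
  intros K.
  assert (Hex : exists t, (1 <= t)%nat /\ K <= a t).
  { apply NNPP; intro Hn.
    assert (Hb : forall t, (1 <= t)%nat -> a t < K).
    { intros t Ht. destruct (Rlt_or_le (a t) K); auto.
      exfalso; apply Hn; exists t; auto. }
    set (u := fun n => a (S n)).
    assert (Hg : Un_growing u).
    { intro n. unfold u. rewrite (harec (S n)) by lia.
      pose proof (hApos _ (hapos (S n) ltac:(lia))). lra. }
    assert (Hub : has_ub u).
    { exists K. intros r [i ->]. unfold u. left; apply Hb; lia. }
    destruct (growing_cv u Hg Hub) as [L HL].
    assert (HL0 : 0 < L).
    { pose proof (growing_ineq u L Hg HL 0). pose proof (hapos 1%nat ltac:(lia)).
      unfold u in H; lra. }
    assert (HLs : Un_cv (fun n => u (S n)) L).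
    { intros e He. destruct (HL e He) as [N HN]. exists N. intros n Hn0.
      apply HN; lia. }
    pose proof (CV_minus _ _ _ _ HLs HL) as H1.
    pose proof (continuity_seq A u L (hAcont L HL0) HL) as H2.
    assert (H3 : Un_cv (fun n => u (S n) - u n) (A L)).
    { intros e He. destruct (H2 e He) as [N HN]. exists N. intros n Hn0.
      unfold u. rewrite (harec (S n)) by lia.
      replace (a (S n) + A (a (S n)) - a (S n)) with (A (u n)) by (unfold u; ring).
      apply HN; auto. }
    pose proof (UL_sequence _ _ _ H1 H3). pose proof (hApos L HL0). lra. }
  destruct Hex as [t [Ht HK]]. exists t. split; auto. intros s Hs.
  replace s with (t + (s - t))%nat by lia. pose proof (mono t (s - t)%nat Ht). lra.
Qed.

Lemma key (A B : R -> R) (a b : nat -> R) (M d : R)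
  (hd : 0 < d)
  (hBpos : forall x, 0 < x -> 0 < B x)
  (hratio : forall x, M <= x -> A x <= (1 + d) * B x)
  (hBdec : forall x y, M <= x -> x <= y -> B y <= B x)
  (hAbd : forall x, M <= x -> A x <= 1)
  (hainf : forall K, exists N, (1 <= N)%nat /\ forall t, (N <= t)%nat -> K <= a t)
  (hbinf : forall K, exists N, (1 <= N)%nat /\ forall t, (N <= t)%nat -> K <= b t)
  (hbpos : forall t, (1 <= t)%nat -> 0 < b t)
  (harec : forall t, (1 <= t)%nat -> a (S t) = a t + A (a t))
  (hbrec : forall t, (1 <= t)%nat -> b (S t) = b t + B (b t)) :
  exists C N, 0 <= C /\ forall t, (N <= t)%nat -> a t <= (1 + d) * b t + C.
Proof.
  destruct (hainf M) as [N1 [HN1 H1]].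
  destruct (hbinf (Rmax M (1 / d))) as [N2 [HN2 H2]].
  set (N := Nat.max N1 N2).
  exists (Rmax (a N - (1 + d) * b N) 0), N. split; [apply Rmax_r|].
  assert (Hk : forall k, a (N + k)%nat - (1 + d) * b (N + k)%nat <= Rmax (a N - (1 + d) * b N) 0).
  { induction k as [|k IH].
    - rewrite Nat.add_0_r. apply Rmax_l.
    - replace (N + S k)%nat with (S (N + k)) by lia.
      set (t := (N + k)%nat) in *.
      assert (Ha : M <= a t) by (apply H1; unfold t, N; lia).
      assert (Hb2 : Rmax M (1/d) <= b t) by (apply H2; unfold t, N; lia).
      assert (HbM : M <= b t) by (pose proof (Rmax_l M (1/d)); lra).
      assert (Hbd : 1 / d <= b t) by (pose proof (Rmax_r M (1/d)); lra).
      assert (Hbt : 0 < b t) by (apply hbpos; unfold t, N; lia).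
      rewrite harec by (unfold t, N; lia). rewrite hbrec by (unfold t, N; lia).
      pose proof (hBpos _ Hbt).
      destruct (Rlt_or_le (b t) (a t)) as [Hlt|Hle].
      + pose proof (hratio _ Ha). pose proof (hBdec _ _ HbM (Rlt_le _ _ Hlt)).
        assert ((1 + d) * B (a t) <= (1 + d) * B (b t)) by (apply Rmult_le_compat_l; lra).
        lra.
      + pose proof (hAbd _ Ha).
        assert (1 <= d * b t).
        { apply (Rmult_le_compat_l d) in Hbd; [|lra].
          replace (d * (1 / d)) with 1 in Hbd by (field; lra). lra. }
        assert (0 <= d * B (b t)) by (apply Rmult_le_pos; lra).
        pose proof (Rmax_r (a N - (1 + d) * b N) 0). nra. }
  intros t Ht. replace t with (N + (t - N))%nat by lia.
  pose proof (Hk (t - N)%nat). lra.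
Qed.

Ltac mx := first [apply Rle_refl | eapply Rle_trans; [|apply Rmax_l]; mx | eapply Rle_trans; [|apply Rmax_r]; mx].

Theorem lemma2 (A B : R -> R) (a b : nat -> R)
  (hApos : forall x, 0 < x -> 0 < A x)
  (hBpos : forall x, 0 < x -> 0 < B x)
  (hAcont : forall x, 0 < x -> continuity_pt A x)
  (hBcont : forall x, 0 < x -> continuity_pt B x)
  (hAdec : eventually_decreasing A)
  (hBdec : eventually_decreasing B)
  (hAlim : lim_at_infty A 0)
  (hBlim : lim_at_infty B 0)
  (hapos : forall t, (1 <= t)%nat -> 0 < a t)
  (hbpos : forall t, (1 <= t)%nat -> 0 < b t)
  (harec : forall t, (1 <= t)%nat -> a (S t) = a t + A (a t))
  (hbrec : forall t, (1 <= t)%nat -> b (S t) = b t + B (b t))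
  (hAB : lim_at_infty (fun x => A x / B x) 1) :
  Un_cv (fun t => a t / b t) 1.
Proof.
  intros eps Heps.
  set (d := Rmin (eps / 8) (1 / 2)).
  assert (Hd0 : 0 < d) by (unfold d; apply Rmin_glb_lt; lra).
  assert (Hd1 : d <= eps / 8) by apply Rmin_l.
  assert (Hd2 : d <= 1 / 2) by apply Rmin_r.
  destruct (hAB (d / 2) ltac:(lra)) as [M0 HM0].
  destruct hAdec as [MA HMA]. destruct hBdec as [MB HMB].
  destruct (hAlim 1 ltac:(lra)) as [LA HLA].
  destruct (hBlim 1 ltac:(lra)) as [LB HLB].
  set (M := Rmax (Rmax (Rmax M0 1) (Rmax MA MB)) (Rmax LA LB)).
  assert (HM : M0 <= M /\ 1 <= M /\ MA <= M /\ MB <= M /\ LA <= M /\ LB <= M).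
  { unfold M. repeat split; mx. }
  destruct HM as [HM1 [HM2 [HM3 [HM4 [HM5 HM6]]]]].
  assert (HAB1 : forall x, M <= x -> A x <= (1 + d) * B x /\ B x <= (1 + d) * A x).
  { intros x Hx. pose proof (HM0 x ltac:(lra)) as H.
    assert (Hb : 0 < B x) by (apply hBpos; lra).
    assert (Ha : 0 < A x) by (apply hApos; lra).
    apply Rabs_def2 in H. destruct H as [H1 H2].
    unfold Rdiv in *.
    assert (E : A x = (A x * / B x) * B x) by (field; lra).
    set (r := A x * / B x) in *. rewrite E. split.
    - apply Rmult_le_compat_r; lra.
    - assert (1 <= (1 + d) * r) by nra.
      replace ((1 + d) * (r * B x)) with (((1 + d) * r) * B x) by ring.
      pose proof (Rmult_le_compat_r (B x) _ _ (Rlt_le _ _ Hb) H). lra. }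
  assert (Hainf := to_infty A a hApos hAcont hapos harec).
  assert (Hbinf := to_infty B b hBpos hBcont hbpos hbrec).
  destruct (key A B a b M d Hd0 hBpos (fun x Hx => proj1 (HAB1 x Hx))
    (fun x y Hx Hy => HMB x y ltac:(lra) Hy)
    (fun x Hx => ltac:(pose proof (HLA x ltac:(lra)) as H; apply Rabs_def2 in H; lra))
    Hainf Hbinf hbpos harec hbrec) as [C1 [N1 [HC1 K1]]].
  destruct (key B A b a M d Hd0 hApos (fun x Hx => proj2 (HAB1 x Hx))
    (fun x y Hx Hy => HMA x y ltac:(lra) Hy)
    (fun x Hx => ltac:(pose proof (HLB x ltac:(lra)) as H; apply Rabs_def2 in H; lra))
    Hbinf Hainf hapos hbrec harec) as [C2 [N2 [HC2 K2]]].
  destruct (Hainf ((C1 + C2 + 1) / d)) as [N3 [HN3 K3]].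
  destruct (Hbinf ((C1 + C2 + 1) / d)) as [N4 [HN4 K4]].
  exists (Nat.max (Nat.max N1 N2) (Nat.max N3 N4)). intros t Ht.
  specialize (K1 t ltac:(lia)). specialize (K2 t ltac:(lia)).
  specialize (K3 t ltac:(lia)). specialize (K4 t ltac:(lia)).
  assert (Hq : C1 + C2 + 1 <= d * ((C1 + C2 + 1) / d)) by (right; field; lra).
  assert (Ha : C1 + C2 + 1 <= d * a t) by (apply (Rmult_le_compat_l d) in K3; lra).
  assert (Hb : C1 + C2 + 1 <= d * b t) by (apply (Rmult_le_compat_l d) in K4; lra).
  assert (Hbp : 0 < b t) by (apply hbpos; lia).
  unfold R_dist.
  replace (a t / b t - 1) with ((a t - b t) / b t) by (field; lra).
  unfold Rdiv. rewrite Rabs_mult, Rabs_inv, (Rabs_right (b t)) by lra.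
  apply (Rmult_lt_reg_r (b t)); [lra|].
  rewrite Rmult_assoc, Rinv_l, Rmult_1_r by lra.
  apply Rabs_def1; nra.
Qed.
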